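(* Let $(V,h)$ and $(V',h')$ be finite-dimensional $\epsilon$-hermitian spaces with respect to $(F,\rho)$, let $n$ be a positive integer, let $\Lambda$ be a self-dual lattice sequence in $(V,h)$, and let $f:V\to V'$ be an $F$-linear isomorphism such that the lattice sequence $f(\Lambda):s\mapsto f(\Lambda_s)$ is self-dual in $(V',h')$ and $$\sigma_{h,h'}(f)\in\tilde{\mathrm U}^n(\Lambda)\,f^{-1}\,\tilde{\mathrm U}^n(f(\Lambda)).$$ Then there is an isometry $\phi:(V,h)\to(V',h')$ of $\epsilon$-hermitian spaces contained in $\tilde{\mathrm U}^n(f(\Lambda))\,f\,\tilde{\mathrm U}^n(\Lambda)$.
   Context: $F$ is a nonarchimedean local field of odd residual characteristic (valuation ring $o_F$, maximal ideal $\mathfrak p_F$), $\rho$ an automorphism of $F$ with $\rho^2=\mathrm{id}$, $\epsilon\in\{\pm1\}$. An $\epsilon$-hermitian space w.r.t. $(F,\rho)$ is a finite-dimensional right $F$-vector space with nondegenerate biadditive $h$ satisfying $h(v_1x,v_2y)=\rho(x)\epsilon\rho(h(v_2,v_1))y$. An $o_F$-lattice sequence $\Lambda$ in $V$ is a map from $\mathbb Z$ to full-rank $o_F$-lattices in $V$, decreasing ($\Lambda_s\subseteq\Lambda_t$ for $s>t$), with $\Lambda_s\pi=\Lambda_{s+e}$ for some fixed $e\ge1$ and a uniformizer $\pi$; $M^{\#}=\{v:h(v,M)\subseteq\mathfrak p_F\}$, and $\Lambda$ is self-dual if $(\Lambda_s)^{\#}=\Lambda_{u-s}$ for some $u$ and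 all $s$. For a lattice sequence $\Lambda$ in $V$, $\mathfrak a_n(\Lambda)=\{a\in\mathrm{End}_F(V): a\Lambda_s\subseteq\Lambda_{s+n}\ \forall s\}$ and $\tilde{\mathrm U}^n(\Lambda)=1+\mathfrak a_n(\Lambda)$ for $n\ge1$. For $f\in\mathrm{Hom}_F(V,V')$, $\sigma_{h,h'}(f)\in\mathrm{Hom}_F(V',V)$ is defined by $h'(f(v),w)=h(v,\sigma_{h,h'}(f)(w))$ for all $v\in V$, $w\in V'$. *)

(* Defs.v *)
From HB Require Import structures.
From mathcomp Require Import all_boot all_order all_algebra.
Set Implicit Arguments. Unset Strict Implicit. Unset Printing Implicit Defensive.
Import Order.TTheory GRing.Theory Num.Theory.
Local Open Scope ring_scope.

(* v x is only meaningful for x != 0 (v 0 = +infinity by convention below). *)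

Definition in_oF (F : fieldType) (v : F -> int) (x : F) : bool :=
  (x == 0) || (0 <= v x).
Definition in_pF (F : fieldType) (v : F -> int) (x : F) : bool :=
  (x == 0) || (0 < v x).
Definition in_pF_pow (F : fieldType) (v : F -> int) (N : nat) (x : F) : bool :=
  (x == 0) || (N%:Z <= v x).

Definition is_discrete_valuation (F : fieldType) (v : F -> int) : Prop :=
  [/\ (forall x y, x != 0 -> y != 0 -> v (x * y) = v x + v y),
      (forall x y, x != 0 -> y != 0 -> x + y != 0 ->
          Num.min (v x) (v y) <= v (x + y))
    & (exists pi : F, pi != 0 /\ v pi = 1)].

Definition valuation_complete (F : fieldType) (v : F -> int) : Prop :=
  forall a : nat -> F,
    (forall N : nat, exists M : nat, forall m k, (M <= m)%N -> (M <= k)%N ->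
        in_pF_pow v N (a m - a k)) ->
    exists l : F, forall N : nat, exists M : nat, forall m, (M <= m)%N ->
        in_pF_pow v N (a m - l).

Definition finite_residue_field (F : fieldType) (v : F -> int) : Prop :=
  exists s : seq F,
    [/\ (forall y, y \in s -> in_oF v y),
        (forall y z, y \in s -> z \in s -> in_pF v (y - z) -> y = z)
      & (forall x, in_oF v x -> exists2 y, y \in s & in_pF v (x - y))].

Definition odd_residual_char (F : fieldType) (v : F -> int) : Prop :=
  ~~ in_pF v 2%:R.

Definition nonarch_local_field_odd (F : fieldType) (v : F -> int) : Prop :=
  [/\ is_discrete_valuation v, valuation_complete v,
      finite_residue_field v & odd_residual_char v].

(* F is commutative, so the right action v x is x *: v *)
Definition eps_hermitian (F : fieldType) (rho : F -> F) (eps : F)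
    (V : vectType F) (h : V -> V -> F) : Prop :=
  [/\ (forall v1 v2 w, h (v1 + v2) w = h v1 w + h v2 w),
      (forall w v1 v2, h w (v1 + v2) = h w v1 + h w v2),
      (forall v1 v2 (x y : F),
          h (x *: v1) (y *: v2) = rho x * (eps * rho (h v2 v1)) * y)
    & (forall w, (forall w', h w w' = 0) -> w = 0)].

Definition is_lattice (F : fieldType) (v : F -> int) (V : vectType F)
    (L : V -> Prop) : Prop :=
  exists b : seq V, basis_of fullv b /\
    forall x, L x <-> exists c : 'I_(size b) -> F,
        (forall i, in_oF v (c i)) /\ x = \sum_(i < size b) c i *: b`_i.

Definition is_lattice_seq (F : fieldType) (v : F -> int) (V : vectType F)
    (L : int -> V -> Prop) : Prop :=
  [/\ (forall s, is_lattice v (L s)),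
      (forall s t, t < s -> forall x, L s x -> L t x)
    & exists e : nat, (0 < e)%N /\ exists pi : F, [/\ pi != 0, v pi = 1 &
        forall s x, L (s + e%:Z) x <-> exists y, L s y /\ x = pi *: y]].

Definition self_dual (F : fieldType) (v : F -> int) (V : vectType F)
    (h : V -> V -> F) (L : int -> V -> Prop) : Prop :=
  exists u : int, forall s x,
    L (u - s) x <-> (forall m, L s m -> in_pF v (h x m)).

Definition self_dual_lattice_seq (F : fieldType) (v : F -> int) (V : vectType F)
    (h : V -> V -> F) (L : int -> V -> Prop) : Prop :=
  is_lattice_seq v L /\ self_dual v h L.

Definition img_seq (F : fieldType) (V V' : vectType F) (f : 'Hom(V, V'))
    (L : int -> V -> Prop) : int -> V' -> Prop :=
  fun s y => exists x, L s x /\ y = f x.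

Definition in_Utilde (F : fieldType) (V : vectType F) (L : int -> V -> Prop)
    (n : nat) (g : 'End(V)) : Prop :=
  forall s x, L s x -> L (s + n%:Z) (g x - x).

Definition is_sigma (F : fieldType) (V V' : vectType F) (h : V -> V -> F)
    (h' : V' -> V' -> F) (f : 'Hom(V, V')) (g : 'Hom(V', V)) : Prop :=
  forall x w, h' (f x) w = h x (g w).

Definition lin_iso (F : fieldType) (V V' : vectType F) (f : 'Hom(V, V')) : Prop :=
  lker f = 0%VS /\ limg f = fullv.

Definition is_isometry (F : fieldType) (V V' : vectType F) (h : V -> V -> F)
    (h' : V' -> V' -> F) (phi : 'Hom(V, V')) : Prop :=
  lin_iso phi /\ forall x y, h' (phi x) (phi y) = h x y.

(* Main.v *)
Require Import Defs.
From HB Require Import structures.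
From mathcomp Require Import all_boot all_order all_algebra.
From mathcomp Require Import zify.
From Stdlib Require IndefiniteDescription.
Import Order.TTheory GRing.Theory Num.Theory.
Local Open Scope ring_scope.
Set Implicit Arguments. Unset Strict Implicit.

Section Val.
Variables (F : fieldType) (v : F -> int).
Hypothesis hv : is_discrete_valuation v.

Lemma vM x y : x != 0 -> y != 0 -> v (x * y) = v x + v y.
Proof. by have [hm _ _] := hv; apply: hm. Qed.

Lemma vD x y : x != 0 -> y != 0 -> x + y != 0 -> Num.min (v x) (v y) <= v (x + y).
Proof. by have [_ hm _] := hv; apply: hm. Qed.

Lemma v1 : v 1 = 0.
Proof.
have h : v (1 : F) = v 1 + v 1 by rewrite -{1}(mulr1 (1:F)) vM ?oner_neq0.
lia.
Qed.

Lemma vN1 : v (-1) = 0.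
Proof.
have n1 : (-1 : F) != 0 by rewrite oppr_eq0 oner_neq0.
have h : v (-1 : F) + v (-1) = 0 by rewrite -vM // mulrNN mulr1 v1.
lia.
Qed.

Lemma vN x : x != 0 -> v (- x) = v x.
Proof.
move=> x0; rewrite -mulN1r vM ?vN1 ?add0r // oppr_eq0 oner_neq0 //.
Qed.

Lemma vV x : x != 0 -> v (x^-1) = - v x.
Proof.
move=> x0; have h : v x + v x^-1 = 0 by rewrite -vM ?invr_neq0 // mulfV // v1.
lia.
Qed.

Lemma vX x k : x != 0 -> v (x ^+ k) = (k%:Z * v x).
Proof.
move=> x0; elim: k => [|k IH]; first by rewrite expr0 v1 mul0r.
rewrite exprS vM ?expf_neq0 // IH; lia.
Qed.

Lemma oF0 : in_oF v 0. Proof. by rewrite /in_oF eqxx. Qed.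

Lemma oFD x y : in_oF v x -> in_oF v y -> in_oF v (x + y).
Proof.
rewrite /in_oF; have [->|x0] := eqVneq x 0; first by rewrite add0r => _ hy.
have [->|y0] := eqVneq y 0; first by rewrite addr0 (negbTE x0) => hx _.
have [->|s0] := eqVneq (x + y) 0; first by [].
move=> /= hx hy; have := vD x0 y0 s0.
rewrite /Num.min; case: ifP => _ h; [exact: le_trans hx h|exact: le_trans hy h].
Qed.

Lemma oFM x y : in_oF v x -> in_oF v y -> in_oF v (x * y).
Proof.
rewrite /in_oF; have [->|x0] := eqVneq x 0; first by rewrite mul0r eqxx.
have [->|y0] := eqVneq y 0; first by rewrite mulr0 eqxx.
rewrite mulf_eq0 (negbTE x0) (negbTE y0) /= vM // => hx hy; lia.
Qed.

Lemma oFN x : in_oF v x -> in_oF v (- x).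
Proof.
rewrite /in_oF; have [->|x0] := eqVneq x 0; first by rewrite oppr0 eqxx.
by rewrite oppr_eq0 (negbTE x0) vN.
Qed.

Lemma oF1 : in_oF v 1. Proof. by rewrite /in_oF v1 lexx orbT. Qed.

Lemma oFn k : in_oF v k%:R.
Proof. elim: k => [|k IH]; first exact: oF0. by rewrite -addn1 natrD oFD // oF1. Qed.

Lemma ppowD N x y : in_pF_pow v N x -> in_pF_pow v N y -> in_pF_pow v N (x + y).
Proof.
rewrite /in_pF_pow; have [->|x0] := eqVneq x 0; first by rewrite add0r => _ hy.
have [->|y0] := eqVneq y 0; first by rewrite addr0 (negbTE x0) => hx _.
have [->|s0] := eqVneq (x + y) 0; first by [].
move=> /= hx hy; have := vD x0 y0 s0.
rewrite /Num.min; case: ifP => _ h; [exact: le_trans hx h|exact: le_trans hy h].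
Qed.

Lemma ppowN N x : in_pF_pow v N x -> in_pF_pow v N (- x).
Proof.
rewrite /in_pF_pow; have [->|x0] := eqVneq x 0; first by rewrite oppr0 eqxx.
by rewrite oppr_eq0 (negbTE x0) vN.
Qed.

Lemma ppowB N x y : in_pF_pow v N x -> in_pF_pow v N y -> in_pF_pow v N (x - y).
Proof. by move=> hx hy; apply: ppowD => //; apply: ppowN. Qed.

Lemma ppow_le N M x : (M <= N)%N -> in_pF_pow v N x -> in_pF_pow v M x.
Proof. rewrite /in_pF_pow => hMN /orP[->//|h]; apply/orP; right; lia. Qed.

Lemma ppow_all x : (forall N, in_pF_pow v N x) -> x = 0.
Proof.
move=> h; apply/eqP; move: (h (`|v x| + 1)%N); rewrite /in_pF_pow => /orP[//|].
lia.
Qed.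

Lemma ppow_oF x : in_pF_pow v 0 x = in_oF v x. Proof. by []. Qed.

Lemma pF_ppow x : in_pF v x = in_pF_pow v 1 x.
Proof. rewrite /in_pF /in_pF_pow; case: (x == 0) => //=; apply/idP/idP; lia. Qed.

Lemma ppow_scale (pi : F) N x : pi != 0 -> v pi = 1 ->
  in_pF_pow v N x = in_oF v (pi ^- N * x).
Proof.
move=> p0 vp; rewrite /in_pF_pow /in_oF mulf_eq0 invr_eq0 expf_eq0 (negbTE p0) andbF /=.
have [//|x0] := eqVneq x 0.
rewrite /= vM ?invr_neq0 ?expf_neq0 // vV ?expf_neq0 // vX // vp.
apply/idP/idP; lia.
Qed.

Lemma oF_pimul (pi : F) N M x : pi != 0 -> v pi = 1 -> in_pF_pow v M x ->
  in_pF_pow v (N + M) (pi ^+ N * x).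
Proof.
move=> p0 vp; rewrite /in_pF_pow mulf_eq0 expf_eq0 (negbTE p0) andbF /=.
have [//|x0] := eqVneq x 0; rewrite /= vM ?expf_neq0 // vX // vp => h; lia.
Qed.

Lemma oF_bound (pi : F) x : pi != 0 -> v pi = 1 -> in_oF v (pi ^+ `|v x| * x).
Proof.
move=> p0 vp; rewrite /in_oF mulf_eq0 expf_eq0 (negbTE p0) andbF /=.
have [//|x0] := eqVneq x 0; rewrite /= vM ?expf_neq0 // vX // vp; lia.
Qed.

Lemma oF_bound_le (pi : F) x K : pi != 0 -> v pi = 1 -> (`|v x| <= K)%N ->
   in_oF v (pi ^+ K * x).
Proof.
move=> p0 vp hK; rewrite /in_oF mulf_eq0 expf_eq0 (negbTE p0) andbF /=.
have [//|x0] := eqVneq x 0; rewrite /= vM ?expf_neq0 // vX // vp; lia.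
Qed.

Lemma v2 : odd_residual_char v -> in_oF v (2%:R^-1).
Proof.
rewrite /odd_residual_char /in_pF negb_or => /andP[n2 hp].
have := oFn 2; rewrite /in_oF (negbTE n2) /= => h2.
by rewrite invr_eq0 (negbTE n2) /= vV // oppr_ge0 leNgt.
Qed.

End Val.


Section Herm.
Variables (F : fieldType) (rho : {rmorphism F -> F}) (eps : F) (W : vectType F).
Variable (h : W -> W -> F).
Hypothesis hh : eps_hermitian rho eps h.

Lemma hsym p q : h p q = eps * rho (h q p).
Proof.
have [_ _ hz _] := hh; have := hz p q 1 1.
by rewrite !scale1r rmorph1 mul1r mulr1.
Qed.

Lemma hZr p q c : h p (c *: q) = h p q * c.
Proof.
have [_ _ hz _] := hh; have := hz p q 1 c.
by rewrite scale1r rmorph1 mul1r -hsym.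
Qed.

Lemma hZl p q c : h (c *: p) q = rho c * h p q.
Proof.
have [_ _ hz _] := hh; have := hz p q c 1.
by rewrite scale1r mulr1 -hsym.
Qed.

Lemma hDl p p' q : h (p + p') q = h p q + h p' q.
Proof. by have [hd _ _ _] := hh; apply: hd. Qed.

Lemma hDr p q q' : h p (q + q') = h p q + h p q'.
Proof. by have [_ hd _ _] := hh; apply: hd. Qed.

Lemma hNl p q : h (- p) q = - h p q.
Proof. by rewrite -scaleN1r hZl rmorphN1 mulN1r. Qed.

Lemma hNr p q : h p (- q) = - h p q.
Proof. by rewrite -scaleN1r hZr mulrN1. Qed.

Lemma hBl p p' q : h (p - p') q = h p q - h p' q.
Proof. by rewrite hDl hNl. Qed.

Lemma hBr p q q' : h p (q - q') = h p q - h p q'.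
Proof. by rewrite hDr hNr. Qed.

Definition sa (y : 'End(W)) := forall p q, h (y p) q = h p (y q).

Lemma sa1 : sa \1%VF.
Proof. by move=> p q; rewrite !id_lfunE. Qed.

Lemma saD y y' : sa y -> sa y' -> sa (y + y').
Proof. by move=> h1 h2 p q; rewrite !add_lfunE hDl hDr h1 h2. Qed.

Lemma saB y y' : sa y -> sa y' -> sa (y - y').
Proof. by move=> h1 h2 p q; rewrite !add_lfunE !opp_lfunE hBl hBr h1 h2. Qed.

Lemma saZ c y : rho c = c -> sa y -> sa (c *: y).
Proof. by move=> hc h1 p q; rewrite !scale_lfunE hZl hZr h1 hc mulrC. Qed.

Lemma sa_sand y w : sa y -> sa w -> sa (y \o w \o y)%VF.
Proof. by move=> h1 h2 p q; rewrite !comp_lfunE h1 h2 h1. Qed.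

Lemma sa_sq y : sa y -> sa (y \o y)%VF.
Proof. by move=> h1 p q; rewrite !comp_lfunE h1 h1. Qed.

End Herm.


Lemma sqdiff (F : fieldType) (W : vectType F) (p q : 'End(W)) :
  ((p \o p) - (q \o q) = (p \o (p - q)) + ((p - q) \o q))%VF.
Proof.
apply/lfunP=> z; rewrite !(add_lfunE, opp_lfunE, comp_lfunE) linearB /=.
by rewrite addrA subrK.
Qed.

Lemma sanddiff (F : fieldType) (W : vectType F) (p q x : 'End(W)) :
  ((p \o x \o p) - (q \o x \o q) = ((p - q) \o x \o p) + (q \o x \o (p - q)))%VF.
Proof.
apply/lfunP=> z; rewrite !(add_lfunE, opp_lfunE, comp_lfunE) !linearB /=.
by rewrite addrA subrK.
Qed.

Section Lat.
Variables (F : fieldType) (v : F -> int) (V : vectType F) (L : int -> V -> Prop).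
Variables (e : nat) (pi : F).
Hypothesis hv : is_discrete_valuation v.
Hypothesis hlat : forall s, is_lattice v (L s).
Hypothesis hmono : forall s t, t < s -> forall x, L s x -> L t x.
Hypothesis he : (0 < e)%N.
Hypothesis p0 : pi != 0.
Hypothesis vp : v pi = 1.
Hypothesis hLe : forall s x, L (s + e%:Z) x <-> exists y, L s y /\ x = pi *: y.

Lemma L0 s : L s 0.
Proof.
have [b [_ hb]] := hlat s; apply/hb; exists (fun _ => 0); split=> [i|].
  exact: oF0.
by rewrite big1 // => i _; rewrite scale0r.
Qed.

Lemma LD s x y : L s x -> L s y -> L s (x + y).
Proof.
have [b [_ hb]] := hlat s => /hb[c [hc ->]] /hb[d [hd ->]].
apply/hb; exists (fun i => c i + d i); split=> [i|]; first by apply: (oFD hv).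
by rewrite -big_split; apply: eq_bigr => i _; rewrite scalerDl.
Qed.

Lemma LZ s c x : in_oF v c -> L s x -> L s (c *: x).
Proof.
have [b [_ hb]] := hlat s => hc0 /hb[d [hd ->]].
apply/hb; exists (fun i => c * d i); split=> [i|]; first by apply: (oFM hv).
by rewrite scaler_sumr; apply: eq_bigr => i _; rewrite scalerA.
Qed.

Lemma LN s x : L s x -> L s (- x).
Proof. by move=> hx; rewrite -scaleN1r; apply: LZ => //; apply/(oFN hv)/(oF1 hv). Qed.

Lemma LB s x y : L s x -> L s y -> L s (x - y).
Proof. by move=> hx hy; apply: LD => //; apply: LN. Qed.

Lemma Lmono s t x : t <= s -> L s x -> L t x.
Proof.
rewrite le_eqVlt => /orP[/eqP->//|hts]; exact: hmono.
Qed.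

Lemma Lup1 s x : L (s + e%:Z) (pi *: x) <-> L s x.
Proof.
split=> [/hLe[y [hy /(scalerI p0) ->]] //|hx].
by apply/hLe; exists x.
Qed.

Lemma LupN k s x : L (s + k%:Z * e%:Z) (pi ^+ k *: x) <-> L s x.
Proof.
elim: k => [|k IH]; first by rewrite mul0r addr0 expr0 scale1r.
have -> : s + k.+1%:Z * e%:Z = (s + k%:Z * e%:Z) + e%:Z by lia.
by rewrite exprS -scalerA Lup1.
Qed.

Variables (b : seq V).
Hypothesis hb : basis_of fullv b.
Hypothesis hb0 : forall x, L 0 x <-> exists c : 'I_(size b) -> F,
        (forall i, in_oF v (c i)) /\ x = \sum_(i < size b) c i *: b`_i.

Let bt := in_tuple b.

Lemma x_coord x : x = \sum_i coord bt i x *: b`_i.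
Proof. by apply: coord_span; rewrite (span_basis hb) memvf. Qed.

Lemma coord_sum (c : 'I_(size b) -> F) j :
  coord bt j (\sum_i c i *: b`_i) = c j.
Proof. by rewrite coord_sum_free //; exact: (basis_free hb). Qed.

Lemma L0coord x : L 0 x <-> forall i, in_oF v (coord bt i x).
Proof.
split=> [/hb0[c [hc ->]] i|h]; first by rewrite coord_sum.
by apply/hb0; exists (fun i => coord bt i x); split=> //; apply: x_coord.
Qed.

Lemma LNcoord N x : L (N%:Z * e%:Z) x <-> forall i, in_pF_pow v N (coord bt i x).
Proof.
have := LupN N 0 (pi ^- N *: x).
rewrite add0r scalerA mulfV ?expf_neq0 // scale1r => ->.
rewrite L0coord; split=> h i; move: (h i); rewrite linearZ /=.
  by rewrite (ppow_scale hv _ _ p0 vp).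
by rewrite (ppow_scale hv _ _ p0 vp).
Qed.

Lemma Lexists x : exists s, L s x.
Proof.
pose K := (\max_i `|v (coord bt i x)|)%N.
exists (- (K%:Z * e%:Z)).
apply/(LupN K); rewrite addNr; apply/L0coord => i; rewrite linearZ /=.
apply: (oF_bound_le hv) => //; rewrite /K. exact: leq_bigmax.
Qed.

Lemma Lzero x : (forall s, L s x) -> x = 0.
Proof.
move=> h; rewrite (x_coord x) big1 // => i _.
have -> : coord bt i x = 0; last by rewrite scale0r.
apply: ppow_all => N; exact: (proj1 (LNcoord N x) (h _) i).
Qed.

Lemma Lscale c : exists J : int, forall s x, L s x -> L (s - J) (c *: x).
Proof.
pose K := `|v c|%N; exists (K%:Z * e%:Z) => s x hx.
apply/(LupN K); rewrite subrK scalerA; apply: LZ => //; exact: (oF_bound hv).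
Qed.

Definition cauchyL (z : nat -> V) := forall s, exists K, forall m k,
  (K <= m)%N -> (K <= k)%N -> L s (z m - z k).
Definition convL (z : nat -> V) (l : V) := forall s, exists K, forall k,
  (K <= k)%N -> L s (l - z k).

Lemma complete z : valuation_complete v -> cauchyL z -> exists l, convL z l.
Proof.
move=> hcomp hc.
have hcoord : forall i, exists l : F, forall N, exists M, forall m, (M <= m)%N ->
    in_pF_pow v N (coord bt i (z m) - l).
  move=> i; apply: hcomp => N; have [K hK] := hc (N%:Z * e%:Z).
  exists K => m k hm hk; have := proj1 (LNcoord N _) (hK m k hm hk) i.
  by rewrite linearB.
have [l hl] := fin_all_exists hcoord.
exists (\sum_i l i *: b`_i) => s.
pose N := `|s|%N.
have [M hM] := fin_all_exists (fun i => hl i N).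
exists (\max_i M i) => k hk.
have h1 : s <= (`|s|%N)%:Z by rewrite abszE ler_norm.
apply: (@Lmono (N%:Z * e%:Z)); first by move: h1; rewrite /N; move: (`|s|%N) => a; nia.
apply/LNcoord => i; rewrite linearB /= coord_sum.
have := hM i k (leq_trans (leq_bigmax i) hk).
by move/(ppowN hv); rewrite opprB.
Qed.

Lemma conv_uniq z l l' : convL z l -> convL z l' -> l = l'.
Proof.
move=> h1 h2; apply/eqP; rewrite -subr_eq0; apply/eqP; apply: Lzero => s.
have [K1 hK1] := h1 s; have [K2 hK2] := h2 s.
have -> : l - l' = (l - z (maxn K1 K2)) - (l' - z (maxn K1 K2)).
  by rewrite opprB addrA subrK.
by apply: LB; [apply: hK1; rewrite leq_maxl|apply: hK2; rewrite leq_maxr].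
Qed.

Lemma conv_add z z' l l' : convL z l -> convL z' l' ->
  convL (fun k => z k + z' k) (l + l').
Proof.
move=> h1 h2 s; have [K1 hK1] := h1 s; have [K2 hK2] := h2 s.
exists (maxn K1 K2) => k; rewrite geq_max => /andP[k1 k2].
have -> : l + l' - (z k + z' k) = (l - z k) + (l' - z' k).
  by rewrite opprD addrACA.
by apply: LD; [apply: hK1|apply: hK2].
Qed.

Lemma conv_scale z l c : convL z l -> convL (fun k => c *: z k) (c *: l).
Proof.
move=> h s; have [J hJ] := Lscale c; have [K hK] := h (s + J).
exists K => k hk; have := hJ _ _ (hK k hk); rewrite addrK.
by rewrite scalerBr.
Qed.

Lemma conv_opp z l : convL z l -> convL (fun k => - z k) (- l).
Proof.
by move=> h s; have [K hK] := h s; exists K => k hk; rewrite -opprD; apply: LN; apply: hK.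
Qed.

Lemma conv_ext z z' l : (forall k, z k = z' k) -> convL z l -> convL z' l.
Proof. by move=> hz h s; have [K hK] := h s; exists K => k hk; rewrite -hz; apply: hK. Qed.

Lemma conv_const c : convL (fun _ => c) c.
Proof. by move=> s; exists 0%N => k _; rewrite subrr; apply: L0. Qed.

Lemma conv_shift z l : convL z l -> convL (fun k => z k.+1) l.
Proof. by move=> h s; have [K hK] := h s; exists K => k hk; apply: hK; apply: leqW. Qed.

Definition Ain (m : int) (y : 'End(V)) := forall s x, L s x -> L (s + m) (y x).

Lemma AD m y y' : Ain m y -> Ain m y' -> Ain m (y + y').
Proof. by move=> h h' s x hx; rewrite add_lfunE; apply: LD; [apply: h|apply: h']. Qed.

Lemma AZ m c y : in_oF v c -> Ain m y -> Ain m (c *: y).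
Proof. by move=> hc h s x hx; rewrite scale_lfunE; apply: LZ => //; apply: h. Qed.

Lemma AN m y : Ain m y -> Ain m (- y).
Proof. by move=> h s x hx; rewrite opp_lfunE; apply: LN; apply: h. Qed.

Lemma AB m y y' : Ain m y -> Ain m y' -> Ain m (y - y').
Proof. by move=> h h'; apply: AD => //; apply: AN. Qed.

Lemma Acomp m m' y y' : Ain m y -> Ain m' y' -> Ain (m + m') (y \o y')%VF.
Proof.
move=> h h' s x hx; rewrite comp_lfunE.
have -> : s + (m + m') = (s + m') + m by lia.
by apply: h; apply: h'.
Qed.

Lemma Amono m m' y : m' <= m -> Ain m y -> Ain m' y.
Proof. by move=> hm h s x hx; apply: (@Lmono (s + m)); [rewrite lerD2l|apply: h]. Qed.

Lemma A1 : Ain 0 \1%VF.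
Proof. by move=> s x hx; rewrite addr0 id_lfunE. Qed.

Lemma A0 m : Ain m 0.
Proof. by move=> s x hx; rewrite zero_lfunE; apply: L0. Qed.

Lemma conv_fix p m z l : Ain m p -> convL z l -> convL (fun k => p (z k)) (p l).
Proof.
move=> hp h s; have [K hK] := h (s - m); exists K => k hk.
by rewrite -linearB; have := hp _ _ (hK k hk); rewrite subrK.
Qed.

Lemma conv_app (y : nat -> 'End(V)) Y m z l : (forall k, Ain m (y k)) ->
  (forall x, convL (fun k => y k x) (Y x)) -> convL z l ->
  convL (fun k => y k (z k)) (Y l).
Proof.
move=> hy hY h s; have [K1 hK1] := hY l s; have [K2 hK2] := h (s - m).
exists (maxn K1 K2) => k; rewrite geq_max => /andP[k1 k2].
have -> : Y l - y k (z k) = (Y l - y k l) + y k (l - z k).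
  by rewrite linearB addrA subrK.
apply: LD; first exact: hK1.
by have := hy k _ _ (hK2 k k2); rewrite subrK.
Qed.

Lemma lim_exists (y : nat -> 'End(V)) (n : nat) : valuation_complete v ->
  (0 < n)%N -> (forall k, Ain (k.+1%:Z * n%:Z) (y k.+1 - y k)) ->
  exists Y : 'End(V), forall x, convL (fun k => y k x) (Y x).
Proof.
move=> hcomp hn hy.
have hcv : forall x, exists l, convL (fun k => y k x) l.
  move=> x; have [t ht] := Lexists x; apply: complete => // s.
  pose K := `|s - t|%N.
  have hj : forall j, L (t + K%:Z * n%:Z) (y (K + j)%N x - y K x).
    elim=> [|j IH]; first by rewrite addn0 subrr; apply: L0.
    have -> : y (K + j.+1)%N x - y K x =
        (y (K + j).+1 - y (K + j)%N) x + (y (K + j)%N x - y K x).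
      by rewrite add_lfunE opp_lfunE addnS addrA subrK.
    apply: LD => //; apply: (@Lmono (t + (K + j).+1%:Z * n%:Z)).
      by rewrite lerD2l; nia.
    exact: hy.
  exists K => m k hm hk.
  have -> : y m x - y k x = (y (K + (m - K))%N x - y K x) - (y (K + (k - K))%N x - y K x).
    by rewrite !subnKC // opprB addrA subrK.
  have h1 : s - t <= (`|s - t|%N)%:Z by rewrite abszE ler_norm.
  apply: (@Lmono (t + K%:Z * n%:Z)); first by move: h1; rewrite /K; move: (`|s - t|%N) => a; nia.
  by apply: LB.
have [Yf hYf] := @IndefiniteDescription.functional_choice _ _ _ hcv.
have linY : linear Yf.
  move=> a x w; apply: (@conv_uniq (fun k => y k (a *: x + w))) => //.
  apply: (@conv_ext (fun k => a *: y k x + y k w)); first by move=> k; rewrite linearP.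
  by apply: conv_add => //; apply: conv_scale.
pose fL : {linear V -> V} := HB.pack Yf (GRing.isLinear.Build _ _ _ _ Yf linY).
by exists (linfun fL) => x; rewrite lfunE.
Qed.

Variables (rho : {rmorphism F -> F}) (eps : F) (V' : vectType F).
Variables (h : V -> V -> F) (h' : V' -> V' -> F) (n : nat) (f : 'Hom(V, V')).
Variables (g : 'Hom(V', V)) (u1 : 'End(V)) (u2 : 'End(V')) (u : int).
Hypothesis hcomp : valuation_complete v.
Hypothesis hodd : odd_residual_char v.
Hypothesis hh : eps_hermitian rho eps h.
Hypothesis hh' : eps_hermitian rho eps h'.
Hypothesis hn : (0 < n)%N.
Hypothesis hu : forall s x, L (u - s) x <-> (forall m, L s m -> in_pF v (h x m)).
Hypothesis hker : lker f = 0%VS.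
Hypothesis himg : limg f = fullv.
Hypothesis hg : is_sigma h h' f g.
Hypothesis hu1 : in_Utilde L n u1.
Hypothesis hu2 : in_Utilde (img_seq f L) n u2.
Hypothesis hgdef : g = (u1 \o f^-1 \o u2)%VF.

Lemma hsmall N a0 b0 p q : u + N%:Z * e%:Z <= a0 + b0 -> L a0 p -> L b0 q ->
  in_pF_pow v N (h p q).
Proof.
move=> hab hp hq.
have hq' : L (b0 - N%:Z * e%:Z) (pi ^- N *: q).
  by apply/(LupN N); rewrite subrK scalerA mulfV ?expf_neq0 // scale1r.
have hp' : L (u - (b0 - N%:Z * e%:Z)) p.
  by apply: (@Lmono a0) => //; lia.
have := proj1 (hu _ _) hp' _ hq'.
have -> : h p q = h p (pi ^- N *: q) * pi ^+ N.
  by rewrite -(hZr hh) scalerA mulfV ?expf_neq0 // scale1r.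
rewrite pF_ppow mulrC => /(oF_pimul hv N p0 vp) h1.
by apply: (ppow_le _ h1); lia.
Qed.

Let a := (g \o f)%VF.
Let x := (a - \1)%VF.

Lemma fK z : f^-1%VF (f z) = z.
Proof. by apply: lker0_lfunK; rewrite hker. Qed.

Lemma Ax : Ain n%:Z x.
Proof.
move=> s z hz; rewrite /x add_lfunE opp_lfunE id_lfunE /a comp_lfunE hgdef !comp_lfunE.
have [w [hw hfw]] : img_seq f L (s + n%:Z) (u2 (f z) - f z) by apply: hu2; exists z.
have -> : u2 (f z) = f z + f w by rewrite -hfw addrC subrK.
rewrite -linearD.
rewrite fK.
have hzw : L s (z + w) by apply: LD => //; apply: (@Lmono (s + n%:Z)) => //; lia.
have := hu1 hzw.
have -> : u1 (z + w) - z = (u1 (z + w) - (z + w)) + w by rewrite opprD addrA subrK.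
by move=> h1; apply: LD.
Qed.

Lemma sa_a : sa h a.
Proof.
move=> p q; rewrite /a !comp_lfunE (hsym hh (g (f p)) q) -hg.
by rewrite -(hsym hh') hg.
Qed.

Lemma sa_x : sa h x.
Proof. exact: (saB hh) sa_a (sa1 h). Qed.

Let c0 : F := - 2%:R^-1.
Let T (w : 'End(V)) : 'End(V) := c0 *: ((w \o w) + ((\1 + w) \o x \o (\1 + w)))%VF.
Let y k := iter k T 0.

Lemma hc0 : in_oF v c0.
Proof. exact: (oFN hv) (v2 hv hodd). Qed.

Lemma rc0 : rho c0 = c0.
Proof. by rewrite /c0 rmorphN fmorphV rmorph_nat. Qed.

Lemma AT w : Ain n w -> Ain n (T w).
Proof.
move=> hw; apply: AZ; first exact: hc0.
have hc : Ain 0 (\1 + w)%VF by apply: AD; [exact: A1|apply: (Amono _ hw); lia].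
apply: AD; first by apply: (Amono _ (Acomp hw hw)); lia.
by apply: (Amono _ (Acomp (Acomp hc Ax) hc)); lia.
Qed.

Lemma yA k : Ain n (y k).
Proof. elim: k => [|k IH]; first exact: A0. exact: AT. Qed.

Lemma Tdiff w w' m : Ain n w -> Ain n w' -> Ain m (w - w') ->
  Ain (m + n) (T w - T w').
Proof.
move=> hw hw' hd.
have -> : T w - T w' = c0 *: (((w \o (w - w')) + ((w - w') \o w')) +
    (((w - w') \o x \o (\1 + w)) + ((\1 + w') \o x \o (w - w'))))%VF.
  rewrite /T -scalerBr opprD addrACA sqdiff sanddiff.
  by have -> : ((\1 + w) - (\1 + w') = w - w')%VF by rewrite opprD addrACA subrr add0r.
have hc : Ain 0 (\1 + w)%VF by apply: AD; [exact: A1|apply: (Amono _ hw); lia].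
have hc' : Ain 0 (\1 + w')%VF by apply: AD; [exact: A1|apply: (Amono _ hw'); lia].
apply: AZ; first exact: hc0.
apply: AD; apply: AD.
- by apply: (Amono _ (Acomp hw hd)); lia.
- by apply: (Amono _ (Acomp hd hw')); lia.
- by apply: (Amono _ (Acomp (Acomp hd Ax) hc)); lia.
- by apply: (Amono _ (Acomp (Acomp hc' Ax) hd)); lia.
Qed.

Lemma yd k : Ain (k.+1%:Z * n%:Z) (y k.+1 - y k).
Proof.
elim: k => [|k IH].
  rewrite subr0 mul1r; exact: (AT (A0 _)).
apply: (Amono _ (Tdiff (yA _) (yA _) IH)); lia.
Qed.

Lemma sa0 : sa h 0.
Proof.
move=> p q; rewrite !zero_lfunE -(scale0r (0 : V)) (hZl hh) (hZr hh).
by rewrite rmorph0 mul0r mulr0.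
Qed.

Lemma ysa k : sa h (y k).
Proof.
elim: k => [|k IH]; first exact: sa0.
apply: (saZ hh); first exact: rc0.
apply: (saD hh); first exact: sa_sq.
by apply: sa_sand; [apply: (saD hh) => //; exact: sa1|exact: sa_x].
Qed.

Section WithY.
Variable Y : 'End(V).
Hypothesis hY : forall z, convL (fun k => y k z) (Y z).

Lemma YA : Ain n Y.
Proof.
move=> s z hz; have [K hK] := hY z (s + n%:Z).
have -> : Y z = (Y z - y K z) + y K z by rewrite subrK.
by apply: LD; [apply: hK|apply: yA].
Qed.

Lemma Ysa : sa h Y.
Proof.
move=> p q; apply/eqP; rewrite -subr_eq0; apply/eqP; apply: ppow_all => N.
have [t ht] := Lexists p; have [r hr] := Lexists q.
have [K1 hK1] := hY p (u + N%:Z * e%:Z - r).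
have [K2 hK2] := hY q (u + N%:Z * e%:Z - t).
pose k := maxn K1 K2.
have -> : h (Y p) q - h p (Y q) = h (Y p - y k p) q - h p (Y q - y k q).
  by rewrite (hBl hh) (hBr hh) ysa opprB addrA subrK.
apply: (ppowB hv).
  apply: (hsmall (a0 := u + N%:Z * e%:Z - r) (b0 := r)) => //; first lia.
  by apply: hK1; rewrite leq_maxl.
apply: (hsmall (a0 := t) (b0 := u + N%:Z * e%:Z - t)) => //; first lia.
by apply: hK2; rewrite leq_maxr.
Qed.

Let C := (\1 + Y)%VF.

Lemma Yeq z : Y z = c0 *: (Y (Y z) + C (x (C z))).
Proof.
pose cs k := (\1 + y k)%VF.
have hC : forall w, convL (fun k => cs k w) (C w).
  move=> w; apply: (@conv_ext (fun k => w + y k w)).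
    by move=> k; rewrite /cs add_lfunE id_lfunE.
  rewrite /C add_lfunE id_lfunE; apply: conv_add => //; exact: conv_const.
have hcsA : forall k, Ain 0 (cs k).
  move=> k; apply: AD; first exact: A1.
  by apply: (Amono _ (yA k)); lia.
have h1 : convL (fun k => c0 *: (y k (y k z) + cs k (x (cs k z))))
                (c0 *: (Y (Y z) + C (x (C z)))).
  apply: conv_scale; apply: conv_add.
    by apply: (conv_app yA hY); apply: hY.
  by apply: (conv_app hcsA hC); apply: (conv_fix Ax); apply: hC.
have h2 : convL (fun k => c0 *: (y k (y k z) + cs k (x (cs k z)))) (Y z).
  apply: (@conv_ext (fun k => y k.+1 z)); last exact: (conv_shift (hY z)).
  by move=> k; rewrite /= scale_lfunE add_lfunE !comp_lfunE.
exact: conv_uniq h2 h1.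
Qed.

Lemma CaC z : C (a (C z)) = z.
Proof.
have ha : forall w, a w = w + x w.
  by move=> w; rewrite /x add_lfunE opp_lfunE id_lfunE addrC subrK.
have hCw : forall w, C w = w + Y w by move=> w; rewrite /C add_lfunE id_lfunE.
have hY2 : Y z + Y z = - (Y (Y z) + C (x (C z))).
  rewrite {1 2}Yeq -scalerDl /c0 -opprD.
  have -> : 2%:R^-1 + 2%:R^-1 = 1 :> F.
    have n2 : (2%:R : F) != 0.
      by move: hodd; rewrite /odd_residual_char /in_pF negb_or => /andP[].
    by rewrite -mulr2n -[(_^-1) *+ 2]mulr_natr mulVf.
  by rewrite scaleN1r.
rewrite ha linearD /=; move: hY2; set t := C (x (C z)) => hY2.
rewrite [C (C z)]hCw hCw linearD /=.
have -> : z + Y z + (Y z + Y (Y z)) + t = z + ((Y z + Y z) + (Y (Y z) + t)).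
  by rewrite -!addrA; congr (_ + _); rewrite !addrA.
by rewrite hY2 addNr addr0.
Qed.

End WithY.

Lemma main_core : exists phi : 'Hom(V, V'), is_isometry h h' phi /\
     exists (w2 : 'End(V')) (w1 : 'End(V)),
       [/\ in_Utilde (img_seq f L) n w2, in_Utilde L n w1
         & phi = (w2 \o f \o w1)%VF].
Proof.
have [Y hY] := lim_exists hcomp hn yd.
pose C := (\1 + Y)%VF.
have hCa := CaC hY.
have finj : injective f by apply/lker0P; rewrite hker.
have Cinj : injective C.
  move=> p q hpq; by rewrite -(hCa p) -(hCa q) /C hpq.
exists (f \o C)%VF; split; last first.
  exists \1%VF, C; split.
  - move=> s z _; rewrite id_lfunE subrr; exists 0; split; first exact: L0.
    by rewrite linear0.
  - move=> s z hz; have -> : C z - z = Y z.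
      by rewrite /C add_lfunE id_lfunE addrAC subrr add0r.
    exact: YA.
  - by rewrite comp_lfun1l.
split.
  split.
    apply/eqP/lker0P => p q; rewrite !comp_lfunE => /finj; exact: Cinj.
  rewrite limg_comp.
  have -> : (C @: fullv = fullv)%VS by apply: lker0_limgf; apply/lker0P.
  exact: himg.
move=> p q; rewrite !comp_lfunE hg.
have -> : g (f (C q)) = a (C q) by rewrite /a comp_lfunE.
have hsaC : sa h C by apply: (saD hh); [exact: sa1|exact: Ysa].
by rewrite hsaC hCa.
Qed.

End Lat.

Theorem corollary3p2 (F : fieldType) (v : F -> int) (rho : {rmorphism F -> F})
    (eps : F) (V V' : vectType F) (h : V -> V -> F) (h' : V' -> V' -> F)
    (n : nat) (L : int -> V -> Prop) (f : 'Hom(V, V')) :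
  nonarch_local_field_odd v ->
  (forall x, rho (rho x) = x) ->
  (eps = 1 \/ eps = -1) ->
  eps_hermitian rho eps h ->
  eps_hermitian rho eps h' ->
  (0 < n)%N ->
  self_dual_lattice_seq v h L ->
  lin_iso f ->
  self_dual v h' (img_seq f L) ->
  (exists g : 'Hom(V', V), is_sigma h h' f g /\
     exists (u1 : 'End(V)) (u2 : 'End(V')),
       [/\ in_Utilde L n u1, in_Utilde (img_seq f L) n u2
         & g = (u1 \o f^-1 \o u2)%VF]) ->
  exists phi : 'Hom(V, V'), is_isometry h h' phi /\
     exists (u2 : 'End(V')) (u1 : 'End(V)),
       [/\ in_Utilde (img_seq f L) n u2, in_Utilde L n u1
         & phi = (u2 \o f \o u1)%VF].
Proof.
move=> [hvd hcomp _ hodd] _ _ hh hh' hn [[hlat hmono [e [he [pi [p0 vp hLe]]]]] [u hu]]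
  [hker himg] _ [g [hg [u1 [u2 [hu1 hu2 hgdef]]]]].
have [b [hb hb0]] := hlat 0.
have := @main_core F v V L e pi hvd hlat hmono he p0 vp hLe b hb hb0 rho eps V' h h' n f g u1 u2 u.
by apply.
Qed.
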